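(* Let $T$ be a $C_{p^rq^s}$-transfer system with exactly two connected components. Then $T$ is lesser simply paired if and only if the connected component of $(0,0)$ is $V_0=\{(0,j):0\le j\le s\}$ or $H_0=\{(i,0):0\le i\le r\}$. In that case $\mathrm{Hull}(T)\ne T_c$, so $(T,\mathrm{Hull}(T))$ and $(T,T_c)$ are two distinct compatible pairs and are the only compatible pairs with first entry $T$.
   Context: $p,q$ are distinct primes and $r,s\ge 0$ integers. The subgroups of $C_{p^rq^s}$ are identified with grid points $(i,j)$, $0\le i\le r$, $0\le j\le s$, where $(i,j)$ stands for $C_{p^iq^j}$ (intersection is coordinatewise minimum). A $C_{p^rq^s}$-transfer system is a partial order $\to$ on these vertices such that: $(i_1,j_1)\to(i_2,j_2)$ implies $i_1\le i_2$, $j_1\le j_2$; it is reflexive and transitive; and $(i_1,j_1)\to(i_2,j_2)$ implies $(\min\{i_1,a\},\min\{j_1,b\})\to(\min\{i_2,a\},\min\{j_2,b\})$ for every vertex $(a,b)$. Connected components are those of the underlying undirected graph. A transfer system is saturated if whenever $L\le K\le H$ and $L\to H$ is in it then $K\to H$ is in it; $\mathrm{Hull}(T)$ is the smallest saturated transfer system containing $T$; $T_c$ is the complete transfer system (all $K\to H$ with $K\le H$). A pair $(T,T')$ is compatible if $T\subseteq T'$ and for all subgroups $A,B,C$ with $B,C\le A$: if $B\to A$ is in $T$ and $B\cap C\to B$ is in $T'$ then $C\to A$ is in $T'$. $T$ is lesser simply paired if for every transfer system $T'\supseteq T$, $(T,T')$ is compatible iff $T'\in\{\mathrm{Hull}(T),T_c\}$.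 *)

(* Defs.v *)
From mathcomp Require Import all_boot.
Set Implicit Arguments.
Unset Strict Implicit.
Unset Printing Implicit Defensive.

(* Subgroups of C_{p^r q^s}: grid points (i,j), 0<=i<=r, 0<=j<=s;
   (i,j) stands for C_{p^i q^j}. *)
Definition vert (r s : nat) : finType := ('I_r.+1 * 'I_s.+1)%type.

Definition vle {r s : nat} (x y : vert r s) : bool :=
  (x.1 <= y.1)%N && (x.2 <= y.2)%N.

Definition vmeet {r s : nat} (x y : vert r s) : vert r s :=
  (inord (minn x.1 y.1), inord (minn x.2 y.2)).

(* A relation on subgroups, as a set of pairs (K,H) meaning K -> H *)
Definition is_transfer {r s : nat} (T : {set vert r s * vert r s}) : bool :=
  [&& [forall x : vert r s, forall y : vert r s, ((x, y) \in T) ==> vle x y],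
      [forall x : vert r s, (x, x) \in T],
      [forall x : vert r s, forall y : vert r s, forall z : vert r s,
         ((x, y) \in T) && ((y, z) \in T) ==> ((x, z) \in T)] &
      [forall x : vert r s, forall y : vert r s, forall c : vert r s,
         ((x, y) \in T) ==> ((vmeet x c, vmeet y c) \in T)]].

Definition uedge {r s : nat} (T : {set vert r s * vert r s}) : rel (vert r s) :=
  fun x y => ((x, y) \in T) || ((y, x) \in T).

Definition ccomp {r s : nat} (T : {set vert r s * vert r s}) (x : vert r s)
  : {set vert r s} := [set y | connect (uedge T) x y].

Definition ncomp {r s : nat} (T : {set vert r s * vert r s}) : nat :=
  #|[set ccomp T x | x : vert r s]|.

Definition saturated {r s : nat} (T : {set vert r s * vert r s}) : bool :=
  [forall L : vert r s, forall K : vert r s, forall H : vert r s,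
     [&& vle L K, vle K H & (L, H) \in T] ==> ((K, H) \in T)].

Definition Hull {r s : nat} (T : {set vert r s * vert r s})
  : {set vert r s * vert r s} :=
  \bigcap_(S : {set vert r s * vert r s} |
             [&& is_transfer S, saturated S & T \subset S]) S.

Definition Tc (r s : nat) : {set vert r s * vert r s} :=
  [set xy : vert r s * vert r s | vle xy.1 xy.2].

Definition compatible {r s : nat} (T T' : {set vert r s * vert r s}) : Prop :=
  T \subset T' /\
  forall A B C : vert r s, vle B A -> vle C A ->
    (B, A) \in T -> (vmeet B C, B) \in T' -> (C, A) \in T'.

Definition lesser_simply_paired {r s : nat} (T : {set vert r s * vert r s})
  : Prop :=
  forall T' : {set vert r s * vert r s}, is_transfer T' -> T \subset T' ->
    (compatible T T' <-> (T' = Hull T \/ T' = Tc r s)).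

Definition origin (r s : nat) : vert r s := (ord0, ord0).
Definition V0 (r s : nat) : {set vert r s} := [set x : vert r s | x.1 == ord0].
Definition H0 (r s : nat) : {set vert r s} := [set x : vert r s | x.2 == ord0].

(* Main.v *)
Require Import Defs.
From mathcomp Require Import all_boot zify.
Set Implicit Arguments.
Unset Strict Implicit.
Unset Printing Implicit Defensive.

Section Basics.
Variables r s : nat.
Implicit Types x y z c : vert r s.

Lemma vm1 x c : ((vmeet x c).1 : nat) = minn x.1 c.1.
Proof. by rewrite /vmeet /= inordK // ltnS geq_min -ltnS ltn_ord. Qed.
Lemma vm2 x c : ((vmeet x c).2 : nat) = minn x.2 c.2.
Proof. by rewrite /vmeet /= inordK // ltnS geq_min -ltnS ltn_ord. Qed.

Lemma veq x y : (x.1 : nat) = y.1 -> (x.2 : nat) = y.2 -> x = y.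
Proof. by case: x y => [a b] [c d] /= h1 h2; congr pair; apply: val_inj. Qed.

Lemma vleE x y : vle x y = ((x.1 <= y.1) && (x.2 <= y.2))%N.
Proof. by []. Qed.

Lemma o1 : ((origin r s).1 : nat) = 0. Proof. by []. Qed.
Lemma o2 : ((origin r s).2 : nat) = 0. Proof. by []. Qed.

Lemma vle_refl x : vle x x.
Proof. by rewrite vleE !leqnn. Qed.
Lemma vle_trans x y z : vle x y -> vle y z -> vle x z.
Proof. rewrite !vleE => /andP[? ?] /andP[? ?]; apply/andP; split; lia. Qed.
Lemma vle_meet x y c : vle x (vmeet y c) = vle x y && vle x c.
Proof. rewrite !vleE vm1 vm2; apply/idP/idP => /andP[]; try case/andP; lia. Qed.
Lemma vle_o x : vle (origin r s) x.
Proof. by rewrite vleE. Qed.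
Lemma vle_antisym x y : vle x y -> vle y x -> x = y.
Proof. rewrite !vleE => /andP[? ?] /andP[? ?]; apply: veq; lia. Qed.
Lemma meet_le x y : vle x y -> vmeet x y = x.
Proof. rewrite vleE => /andP[? ?]; apply: veq; rewrite ?vm1 ?vm2; lia. Qed.
Lemma meet_ge x y : vle x y -> vmeet y x = x.
Proof. rewrite vleE => /andP[? ?]; apply: veq; rewrite ?vm1 ?vm2; lia. Qed.
Lemma meet_lel x c : vle (vmeet x c) x.
Proof. rewrite vleE vm1 vm2; apply/andP; split; lia. Qed.
Lemma meet_ler x c : vle (vmeet x c) c.
Proof. rewrite vleE vm1 vm2; apply/andP; split; lia. Qed.
Lemma meet_o x c : vmeet x c = origin r s <-> minn x.1 c.1 = 0 /\ minn x.2 c.2 = 0.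
Proof.
split; first by move=> h; rewrite -vm1 -vm2 h.
by case=> h1 h2; apply: veq; rewrite ?vm1 ?vm2 ?h1 ?h2.
Qed.

Variable U : {set vert r s * vert r s}.
Hypothesis trU : is_transfer U.
Lemma tr_le x y : (x, y) \in U -> vle x y.
Proof. by case/and4P: trU => /forallP/(_ x)/forallP/(_ y)/implyP. Qed.
Lemma tr_refl x : (x, x) \in U.
Proof. by case/and4P: trU => _ /forallP. Qed.
Lemma tr_trans x y z : (x, y) \in U -> (y, z) \in U -> (x, z) \in U.
Proof.
case/and4P: trU => _ _ /forallP/(_ x)/forallP/(_ y)/forallP/(_ z)/implyP h _ a b.
by apply: h; rewrite a b.
Qed.
Lemma tr_meet x y c : (x, y) \in U -> (vmeet x c, vmeet y c) \in U.
Proof. by case/and4P: trU => _ _ _ /forallP/(_ x)/forallP/(_ y)/forallP/(_ c)/implyP. Qed.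
End Basics.

Lemma mk_tr r s (U : {set vert r s * vert r s}) :
  (forall x y, (x, y) \in U -> vle x y) ->
  (forall x, (x, x) \in U) ->
  (forall x y z, (x, y) \in U -> (y, z) \in U -> (x, z) \in U) ->
  (forall x y c, (x, y) \in U -> (vmeet x c, vmeet y c) \in U) ->
  is_transfer U.
Proof.
move=> h1 h2 h3 h4; apply/and4P; split.
- by apply/forallP=> x; apply/forallP=> y; apply/implyP; apply: h1.
- by apply/forallP.
- apply/forallP=> x; apply/forallP=> y; apply/forallP=> z; apply/implyP.
  by case/andP; apply: h3.
- by apply/forallP=> x; apply/forallP=> y; apply/forallP=> c; apply/implyP; apply: h4.
Qed.
Section Struct.
Variables r s : nat.
Variable T : {set vert r s * vert r s}.
Hypothesis trT : is_transfer T.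
Local Notation o := (origin r s).
Local Notation conn := (connect (uedge T)).

Lemma usym : symmetric (uedge T).
Proof. by move=> x y; rewrite /uedge orbC. Qed.
Lemma conn_sym x y : conn x y = conn y x.
Proof. exact: (sym_connect_sym usym). Qed.

Lemma conn_meet x y c : conn x y -> conn (vmeet x c) (vmeet y c).
Proof.
move=> /connectP[p pp ->]; elim: p x pp => [|z p IH] x /=; first by rewrite connect0.
case/andP=> exz pz; apply: connect_trans (IH _ pz).
apply: connect1; case/orP: exz => h; rewrite /uedge.
  by rewrite (tr_meet trT c h).
by rewrite (tr_meet trT c h) orbT.
Qed.

Lemma edge_conn x y : (x, y) \in T -> conn x y.
Proof. by move=> h; apply: connect1; rewrite /uedge h. Qed.

Lemma ccomp_eq a b : ccomp T a = ccomp T b -> conn a b.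
Proof.
move=> h; have : b \in ccomp T b by rewrite inE connect0.
by rewrite -h inE.
Qed.

Lemma minconn a : (forall v, conn a v -> vle a v) ->
  forall v, conn a v -> (a, v) \in T.
Proof.
move=> Hmin v /connectP[p pp ->].
suff H : forall u, conn a u -> (a, u) \in T -> path (uedge T) u p -> (a, last u p) \in T.
  by apply: H pp; [apply: connect0|apply: tr_refl].
clear pp.
elim: p => [|z p IH] u //= cu au /andP[euz pz].
have cz : conn a z by apply: connect_trans cu (connect1 euz).
apply: (IH z cz _ pz).
case/orP: euz => h.
  exact: (tr_trans trT au h).
have := tr_meet trT z au; rewrite (meet_le (Hmin _ cz)) (meet_ge (tr_le trT h)).
by [].
Qed.

Hypothesis n2 : ncomp T = 2.

Lemma ex_other : exists y, ~~ conn o y.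
Proof.
case: (boolP [exists y, ~~ conn o y]) => [/existsP //|/existsPn h].
have h' : forall y, conn o y by move=> y; have := h y; rewrite negbK.
move: n2; rewrite /ncomp.
have -> : [set ccomp T x | x : vert r s] = [set ccomp T o].
  apply/setP=> A; rewrite inE; apply/imsetP/eqP => [[x _ ->]|->].
    apply/setP=> z; rewrite !inE; apply/idP/idP => hz.
      by apply: connect_trans (h' x) hz.
    by apply: connect_trans _ hz; rewrite conn_sym.
  by exists o.
by rewrite cards1.
Qed.

Lemma other_conn y z : ~~ conn o y -> ~~ conn o z -> conn y z.
Proof.
move=> hy hz; apply/negPn/negP => hyz.
have : (3 <= ncomp T)%N; last by rewrite n2.
have -> : 3 = #|ccomp T o |: [set ccomp T y; ccomp T z]|.
  rewrite cardsU1 cards2 !inE negb_or.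
  have ne : forall a b, ~~ conn a b -> ccomp T a != ccomp T b.
    by move=> a b hab; apply/eqP => /ccomp_eq; apply/negP.
  by rewrite !ne.
apply: subset_leq_card; apply/subsetP => A; rewrite !inE.
by case/or3P => /eqP ->; apply: imset_f.
Qed.

Lemma structure : exists m : vert r s, m != o /\
  (forall x, conn o x = ~~ vle m x) /\
  (forall x y, conn x y = (vle m x == vle m y)).
Proof.
have [y0 Hy0] := ex_other.
have [m Pm Hmin] := @arg_minnP _ y0 (fun x => ~~ conn o x) (fun x : vert r s => (x.1 + x.2)%N) Hy0.
have upc : forall x w, ~~ conn o x -> vle x w -> ~~ conn o w.
  move=> x w hx xw; apply/negP => hw; move/negP: hx; apply.
  by have := conn_meet x hw; rewrite (meet_le (vle_o _)) (meet_ge xw).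
have mle : forall y, ~~ conn o y -> vle m y.
  move=> y hy; have cmy := other_conn Pm hy.
  have := conn_meet m cmy; rewrite (meet_le (vle_refl m)) => cm.
  have hym : ~~ conn o (vmeet y m).
    by apply/negP => h; move/negP: Pm; apply; apply: connect_trans h _; rewrite conn_sym.
  have := Hmin _ hym; rewrite vm1 vm2 vleE => hh; apply/andP; split; lia.
have Hc : forall x, conn o x = ~~ vle m x.
  move=> x; apply/idP/idP => [h|h].
    by apply/negP => /(upc _ _ Pm); rewrite h.
  by apply/negPn/negP => /mle; apply/negP.
exists m; split; [|split] => //.
  by apply/eqP => e; move: Pm; rewrite e connect0.
move=> x y; apply/idP/idP => [h|/eqP h].
  have e : conn o x = conn o y.
    apply/idP/idP => h2; first by apply: connect_trans h2 h.
    by apply: connect_trans h2 _; rewrite conn_sym.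
  by rewrite -(negbK (vle m x)) -(negbK (vle m y)) -!Hc e.
case: (boolP (vle m x)) => hx.
  by apply: other_conn; rewrite Hc negbK // -h.
have cx : conn o x by rewrite Hc.
have cy : conn o y by rewrite Hc -h.
by apply: connect_trans cy; rewrite conn_sym.
Qed.
End Struct.
Section Main.
Variables r s : nat.
Variable T : {set vert r s * vert r s}.
Hypothesis trT : is_transfer T.
Local Notation o := (origin r s).
Local Notation conn := (connect (uedge T)).
Variable m : vert r s.
Hypothesis Hm : m != o.
Hypothesis Hc : forall x, conn o x = ~~ vle m x.
Hypothesis Hcc : forall x y, conn x y = (vle m x == vle m y).

Definition S := [set xy : vert r s * vert r s | vle xy.1 xy.2 && (vle m xy.1 == vle m xy.2)].

Lemma inS x y : ((x, y) \in S) = vle x y && (vle m x == vle m y).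
Proof. by rewrite inE. Qed.

Lemma mo : vle m o = false.
Proof. by apply/negP => h; move/eqP: Hm; apply; apply: vle_antisym h (vle_o _). Qed.

Lemma TinS : T \subset S.
Proof.
apply/subsetP => -[x y] h; rewrite inS (tr_le trT h) -Hcc.
exact: edge_conn.
Qed.

Lemma o_edge y : ~~ vle m y -> (o, y) \in T.
Proof.
move=> h; apply: (minconn trT) => [v _|]; first by apply: vle_o.
by rewrite Hc.
Qed.

Lemma m_edge y : vle m y -> (m, y) \in T.
Proof.
move=> h; apply: (minconn trT) => [v|]; last by rewrite Hcc h vle_refl.
by rewrite Hcc vle_refl => /eqP <-.
Qed.

Lemma S_tr : is_transfer S.
Proof.
apply: mk_tr => [x y|x|x y z|x y c]; rewrite ?inS.
- by case/andP.
- by rewrite vle_refl eqxx.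
- case/andP=> h1 /eqP e1; case/andP=> h2 /eqP e2.
  by rewrite (vle_trans h1 h2) e1 e2 eqxx.
- case/andP=> h1 /eqP e1; rewrite !vle_meet e1 eqxx andbT.
  move: h1; rewrite !vleE !vm1 !vm2 => /andP[? ?]; apply/andP; split; lia.
Qed.

Lemma sat_app (U : {set vert r s * vert r s}) L K H :
  saturated U -> vle L K -> vle K H -> (L, H) \in U -> (K, H) \in U.
Proof.
move=> /forallP/(_ L)/forallP/(_ K)/forallP/(_ H)/implyP h a b c.
by apply: h; rewrite a b c.
Qed.

Lemma S_sat : saturated S.
Proof.
apply/forallP => L; apply/forallP => K; apply/forallP => H; apply/implyP.
case/and3P => LK KH; rewrite !inS KH /= => /andP[LH /eqP e].
case: (boolP (vle m H)) => hH.
  by rewrite (vle_trans _ LK) // e.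
rewrite eqbF_neg; apply/negP => hK.
by move/negP: hH; apply; apply: vle_trans hK KH.
Qed.

Lemma Hull_S : Hull T = S.
Proof.
apply/eqP; rewrite eqEsubset; apply/andP; split.
  by apply: bigcap_inf; rewrite S_tr S_sat TinS.
apply/bigcapsP => U /and3P [trU satU TU]; apply/subsetP => -[x y].
rewrite inS => /andP[xy /eqP e].
case: (boolP (vle m y)) => hy.
  have hx : vle m x by rewrite e.
  apply: (sat_app satU hx xy).
  by apply: (subsetP TU); apply: m_edge.
apply: (sat_app satU (vle_o x) xy).
by apply: (subsetP TU); apply: o_edge.
Qed.

Lemma Hull_ne : Hull T != Tc r s.
Proof.
rewrite Hull_S; apply/negP => /eqP e.
have : (o, m) \in Tc r s by rewrite inE /= vle_o.
by rewrite -e inS mo vle_refl.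
Qed.

Lemma compat_S : compatible T S.
Proof.
split; first exact: TinS.
move=> A B C BA CA hT; rewrite !inS vle_meet meet_lel CA /= => /eqP e.
have /subsetP/(_ _ hT) := TinS; rewrite inS => /andP[_ /eqP eBA].
apply/eqP; case: (boolP (vle m A)) => hA.
  by move: e; rewrite eBA hA /= => ->.
by apply/negP => hC; move/negP: hA; apply; apply: vle_trans hC CA.
Qed.

Lemma compat_Tc : compatible T (Tc r s).
Proof.
split; first by apply/subsetP => -[x y] h; rewrite inE /=; exact: (tr_le trT h).
by move=> A B C _ CA _ _; rewrite inE.
Qed.

Definition atom := forall z, vle z m -> z = o \/ z = m.

Lemma atom_case (T' : {set vert r s * vert r s}) : atom -> is_transfer T' ->
  compatible T T' -> T' = S \/ T' = Tc r s.
Proof.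
move=> hat trT' [TT' comp].
have SinT' : S \subset T'.
  apply/subsetP => -[x y]; rewrite inS => /andP[xy /eqP e].
  case: (boolP (vle m y)) => hy.
    have hx : vle m x by rewrite e.
    apply: (comp y m x hy xy (m_edge hy)).
    by rewrite (meet_le hx); apply: tr_refl.
  apply: (comp y o x (vle_o y) xy (o_edge hy)).
  by rewrite (meet_le (vle_o x)); apply: tr_refl.
case: (boolP (T' \subset S)) => hsub.
  by left; apply/eqP; rewrite eqEsubset hsub SinT'.
right; have [[x y] xyT' xyS] : exists2 xy, xy \in T' & xy \notin S.
  by move/subsetPn: hsub => [xy ? ?]; exists xy.
have xy := tr_le trT' xyT'.
move: xyS; rewrite inS xy /=.
case: (boolP (vle m x)) => hx.
  by rewrite (vle_trans hx xy).
case: (boolP (vle m y)) => hy // _.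
have hom : (o, m) \in T'.
  have := tr_meet trT' m xyT'; rewrite (meet_ge hy).
  case: (hat _ (meet_ler x m)) => e; first by rewrite e.
  have := vle_refl m; rewrite -{2}e vle_meet => /andP[h0 _].
  by rewrite h0 in hx.
apply/eqP; rewrite eqEsubset; apply/andP; split.
  by apply/subsetP => -[a b] h; rewrite inE /=; exact: (tr_le trT' h).
apply/subsetP => -[C A]; rewrite inE /= => CA.
case: (boolP (vle m C == vle m A)) => e.
  by apply: (subsetP SinT'); rewrite inS CA.
have hA : vle m A.
  apply/negPn/negP => hA; move: e; rewrite (negbTE hA).
  case: (boolP (vle m C)) => // hC _.
  by move/negP: hA; apply; apply: vle_trans hC CA.
apply: (comp A m C hA CA (m_edge hA)).
case: (hat _ (meet_lel m C)) => ->; first by [].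
exact: tr_refl.
Qed.

Definition T2 := [set xy : vert r s * vert r s |
  vle xy.1 xy.2 && ((vle m xy.1 == vle m xy.2) || (vmeet xy.1 m == o))].

Lemma inT2 x y : ((x, y) \in T2) =
  vle x y && ((vle m x == vle m y) || (vmeet x m == o)).
Proof. by rewrite inE. Qed.

Lemma meet_oE x c : (vmeet x c == o) = ((minn x.1 c.1 == 0) && (minn x.2 c.2 == 0))%N.
Proof.
apply/eqP/andP => [/meet_o [-> ->]//|[/eqP h1 /eqP h2]].
by apply/meet_o.
Qed.

Lemma T2_tr : is_transfer T2.
Proof.
apply: mk_tr => [x y|x|x y z|x y c]; rewrite ?inT2.
- by case/andP.
- by rewrite vle_refl eqxx.
- case/andP=> h1 o1; case/andP=> h2 o2; rewrite (vle_trans h1 h2) /=.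
  case/orP: o1 => [/eqP e1|hx]; last by rewrite hx orbT.
  case/orP: o2 => [/eqP e2|hy]; first by rewrite e1 e2 eqxx.
  move: hy h1; rewrite !meet_oE vleE => /andP[/eqP a /eqP b] /andP[? ?].
  by apply/orP; right; apply/andP; split; apply/eqP; lia.
- case/andP=> h1 o1; apply/andP; split.
    move: h1; rewrite !vleE !vm1 !vm2 => /andP[? ?]; apply/andP; split; lia.
  case/orP: o1 => [/eqP e1|hx].
    by rewrite !vle_meet e1 eqxx.
  move: hx; rewrite !meet_oE !vm1 !vm2 => /andP[/eqP a /eqP b].
  by apply/orP; right; apply/andP; split; apply/eqP; lia.
Qed.

Lemma compat_T2 : compatible T T2.
Proof.
split.
  apply/subsetP => -[x y] h; have := subsetP TinS _ h.
  by rewrite inS inT2 => /andP[-> ->].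
move=> A B C BA CA hT; rewrite !inT2 CA /= vle_meet meet_lel /=.
have /subsetP/(_ _ hT) := TinS; rewrite inS => /andP[_ /eqP eBA].
case: (boolP (vle m A)) => hA; last first.
  case: (boolP (vle m C)) => hC //.
  by move/negP: hA; case; apply: vle_trans hC CA.
rewrite eBA hA /= => /orP [->//|].
have hB : vle m B by rewrite eBA.
move: hB; rewrite vleE !meet_oE !vm1 !vm2 => /andP[? ?] /andP[/eqP a /eqP b].
by apply/orP; right; apply/andP; split; apply/eqP; lia.
Qed.

Lemma nonatom_case z : vle z m -> z != o -> z != m ->
  ~ lesser_simply_paired T.
Proof.
move=> zm zo zmm lsp.
have TT2 : T \subset T2 by case: compat_T2.
case: ((lsp T2 T2_tr TT2).1 compat_T2) => e.
  have : (o, m) \in T2 by rewrite inT2 vle_o (meet_le (vle_o _)) eqxx orbT.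
  by rewrite e Hull_S inS mo vle_refl.
have : (z, m) \in Tc r s by rewrite inE.
rewrite -e inT2 zm (meet_le zm) (negbTE zo) orbF vle_refl /=.
apply/negP; case: (boolP (vle m z)) => // h.
by move/eqP: zmm; case; apply: vle_antisym.
Qed.
End Main.
Section Cond.
Variables r s : nat.
Local Notation o := (origin r s).
Variable m : vert r s.
Hypothesis Hm : m != o.

Local Notation cond := ([set x | ~~ vle m x] = V0 r s \/ [set x | ~~ vle m x] = H0 r s).

Lemma ord0E n (i : 'I_n.+1) : (i == ord0) = ((i : nat) == 0%N).
Proof. by rewrite -val_eqE. Qed.

Lemma cond_atom : cond -> atom m.
Proof.
case=> h; move/setP: h => h; move=> z zm.
- have hx x : ~~ vle m x = ((x.1 : nat) == 0%N) by move: (h x); rewrite !inE ord0E.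
  have m1 : (m.1 : nat) != 0%N by rewrite -hx vle_refl.
  have r1 : (1 < r.+1)%N by have := ltn_ord m.1; lia.
  pose e : vert r s := (inord 1, ord0).
  have : ~~ ~~ vle m e by rewrite hx /= inordK.
  rewrite negbK vleE /= inordK // => /andP[a b].
  move: zm; rewrite vleE => /andP[c d].
  case: (boolP ((z.1 : nat) == 0%N)) => z1.
    have {}z1 : (z.1 : nat) = 0%N by apply/eqP.
    left; apply: veq => /=; first exact: z1.
    by apply/eqP; rewrite -leqn0; exact: leq_trans d b.
  move: z1; rewrite -lt0n => z1; right; apply: veq.
    by apply/eqP; rewrite eqn_leq c; exact: leq_trans a z1.
  by have := leq_trans d b; have := b; rewrite !leqn0 => /eqP -> /eqP ->.
- have hx x : ~~ vle m x = ((x.2 : nat) == 0%N) by move: (h x); rewrite !inE ord0E.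
  have m1 : (m.2 : nat) != 0%N by rewrite -hx vle_refl.
  have r1 : (1 < s.+1)%N by have := ltn_ord m.2; lia.
  pose e : vert r s := (ord0, inord 1).
  have : ~~ ~~ vle m e by rewrite hx /= inordK.
  rewrite negbK vleE /= inordK // => /andP[a b].
  move: zm; rewrite vleE => /andP[c d].
  case: (boolP ((z.2 : nat) == 0%N)) => z1.
    have {}z1 : (z.2 : nat) = 0%N by apply/eqP.
    left; apply: veq => /=; last exact: z1.
    by apply/eqP; rewrite -leqn0; exact: leq_trans c a.
  move: z1; rewrite -lt0n => z1; right; apply: veq.
    by have := leq_trans c a; have := a; rewrite !leqn0 => /eqP -> /eqP ->.
  by apply/eqP; rewrite eqn_leq d; exact: leq_trans b z1.
Qed.

Lemma atom_cond : atom m -> cond.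
Proof.
move=> hat.
have : ((m.1 : nat) != 0%N) || ((m.2 : nat) != 0%N).
  case: (boolP ((m.1 : nat) == 0%N)) => a; last by [].
  case: (boolP ((m.2 : nat) == 0%N)) => b; last by rewrite orbT.
  exfalso; move/eqP: Hm; apply; apply: veq; apply/eqP; [exact: a|exact: b].
case/orP => hm.
- have r1 : (1 < r.+1)%N by have := ltn_ord m.1; lia.
  pose e : vert r s := (inord 1, ord0).
  have em : e = m.
    have hem : vle e m by rewrite vleE /= inordK // leq0n andbT lt0n; exact: hm.
    case: (hat e hem) => // h0.
    by move/(f_equal (fun v : vert r s => (v.1 : nat))): h0; rewrite /= inordK.
  left; apply/setP => x; rewrite !inE -em vleE /= inordK // leq0n andbT lt0n negbK.
  by rewrite ord0E.
- have r1 : (1 < s.+1)%N by have := ltn_ord m.2; lia.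
  pose e : vert r s := (ord0, inord 1).
  have em : e = m.
    have hem : vle e m by rewrite vleE /= inordK // ?leq0n /= lt0n; exact: hm.
    case: (hat e hem) => // h0.
    by move/(f_equal (fun v : vert r s => (v.2 : nat))): h0; rewrite /= inordK.
  right; apply/setP => x; rewrite !inE -em vleE /= inordK // ?leq0n /= lt0n negbK.
  by rewrite ord0E.
Qed.

Lemma nonatom : ~ atom m -> exists z, [/\ vle z m, z != o & z != m].
Proof.
move=> na.
case: (boolP [exists z, [&& vle z m, z != o & z != m]]) => [/existsP [z /and3P [a b c]]|h].
  by exists z.
case: na => z zm; move/existsPn: h => /(_ z); rewrite zm /= negb_and !negbK.
by case/orP => /eqP ->; [left|right].
Qed.
End Cond.

Theorem mainTheorem16 (p q r s : nat) (T : {set vert r s * vert r s}) :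
  prime p -> prime q -> p != q ->
  is_transfer T -> ncomp T = 2 ->
  (lesser_simply_paired T <->
     (ccomp T (origin r s) = V0 r s \/ ccomp T (origin r s) = H0 r s)) /\
  ((ccomp T (origin r s) = V0 r s \/ ccomp T (origin r s) = H0 r s) ->
     [/\ Hull T != Tc r s,
         compatible T (Hull T),
         compatible T (Tc r s) &
         forall T' : {set vert r s * vert r s}, is_transfer T' ->
           compatible T T' -> T' = Hull T \/ T' = Tc r s]).
Proof.
move=> _ _ _ trT n2.
have [m [Hm [Hc Hcc]]] := structure trT n2.
have -> : ccomp T (origin r s) = [set x | ~~ vle m x].
  by apply/setP => x; rewrite !inE Hc.
have HS := Hull_S trT Hm Hc Hcc.
have part2 : ([set x | ~~ vle m x] = V0 r s \/ [set x | ~~ vle m x] = H0 r s) ->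
     [/\ Hull T != Tc r s,
         compatible T (Hull T),
         compatible T (Tc r s) &
         forall T' : {set vert r s * vert r s}, is_transfer T' ->
           compatible T T' -> T' = Hull T \/ T' = Tc r s].
  move=> hc; have hat := cond_atom Hm hc.
  split.
  - exact: (Hull_ne trT Hm Hc Hcc).
  - by rewrite HS; exact: (compat_S trT Hcc).
  - exact: (compat_Tc trT).
  - by move=> T' trT' cT'; rewrite HS; exact: (atom_case trT Hc Hcc hat trT' cT').
split => //; split.
  move=> lsp; apply: (atom_cond Hm).
  move=> z zm; case: (eqVneq z (origin r s)) => [->|zo]; first by left.
  case: (eqVneq z m) => [->|zmm]; first by right.
  by case: (nonatom_case trT Hm Hc Hcc zm zo zmm lsp).
move=> hc T' trT' TT'; split.
  by move=> cT'; case: (part2 hc) => _ _ _; apply.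
by case=> ->; [case: (part2 hc)|exact: (compat_Tc trT)].
Qed.
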